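(* Let $n\ge1$, let $k,k'$ be divisors of $n$, and let $\mathbf{S}=\mathbf{P\L}_k\times\mathbf{P\L}_{k'}$. (1) Let $\mathbf{R}$ be a subalgebra of $\mathbf{P\L}_n\times\mathbf{P\L}_n$ satisfying: - $\mathbf{R}\subseteq{\le}$; - $\mathbf{R}$ is not the diagonal of a subalgebra of $\mathbf{P\L}_n$; - $\mathrm{pr}_1(\mathbf{R})\times\mathrm{pr}_2(\mathbf{R})=\mathbf{S}$. For each $i=0,\dots,k$ let $y_i$ be the least element of $\mathbf{P\L}_{k'}$ with $(\tfrac ik,y_i)\in\mathbf{R}$. Such $y_i$ exists, $y_0=0$ and $y_k=1$, and $$\mathbf{R}=\bigcup_{i=0}^k C_{(\frac ik,y_i),\mathbf{S}}.$$ (2) Let $y_0\le y_1\le\dots\le y_k$ be elements of $\mathbf{P\L}_{k'}$ with $y_0=0$, $y_k=1$ and $\tfrac ik\le y_i$ for $i=1,\dots,k-1$. Put $\mathbf{R}=\bigcup_{i=0}^k C_{(\frac ik,y_i),\mathbf{S}}$. Then $\mathbf{R}$ is a subuniverse of $\mathbf{S}$ if and only if $$(\tfrac ik,y_i)\odot(\tfrac jk,y_j)\in\mathbf{R}\quad\text{and}\quad(\tfrac ik,y_i)\oplus(\tfrac jk,y_j)\in\mathbf{R}$$ for all $i,j\in\{1,\dots,k-1\}$. Here the operations are computed componentwise.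
   Context: For $n\ge 1$, the algebra $\mathbf{P\L}_n=\langle\{0,\tfrac1n,\dots,\tfrac{n-1}{n},1\},\wedge,\vee,\odot,\oplus,0,1\rangle$ has $\wedge=\min$, $\vee=\max$, $x\odot y=\max\{0,x+y-1\}$ and $x\oplus y=\min\{1,x+y\}$. For a divisor $k$ of $n$, $\mathbf{P\L}_k$ denotes the subalgebra of $\mathbf{P\L}_n$ with universe $\{\tfrac ik:0\le i\le k\}$. The order is ${\le}=\{(x,y): x\le y\}\subseteq\mathbf{P\L}_n^2$. For a product $\mathbf{S}$ of two subalgebras of $\mathbf{P\L}_n$ and $(x,y)\in\mathbf{S}$ with $x\le y$, define $$C_{(x,y),\mathbf{S}}=\{(x',y')\in \mathbf{S}: x'\le x,\ y\le y'\}.$$ *)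

(* Defs.v *)
From mathcomp Require Import all_boot all_order all_algebra.
Set Implicit Arguments. Unset Strict Implicit. Unset Printing Implicit Defensive.
Import Order.TTheory GRing.Theory Num.Theory.
Local Open Scope ring_scope.

(* Elements of PL_n are represented as rationals in [0,1]. *)

Definition inPL (n : nat) (x : rat) : Prop :=
  exists i : nat, (i <= n)%N /\ x = i%:R / n%:R.

Definition lmeet (x y : rat) : rat := Num.min x y.
Definition ljoin (x y : rat) : rat := Num.max x y.
Definition lodot (x y : rat) : rat := Num.max 0 (x + y - 1).
Definition loplus (x y : rat) : rat := Num.min 1 (x + y).

Definition pmeet (p q : rat * rat) := (lmeet p.1 q.1, lmeet p.2 q.2).
Definition pjoin (p q : rat * rat) := (ljoin p.1 q.1, ljoin p.2 q.2).
Definition podot (p q : rat * rat) := (lodot p.1 q.1, lodot p.2 q.2).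
Definition poplus (p q : rat * rat) := (loplus p.1 q.1, loplus p.2 q.2).

Definition subuniv1 (U A : rat -> Prop) : Prop :=
  (forall x, A x -> U x) /\ A 0 /\ A 1 /\
  (forall x y, A x -> A y ->
     [/\ A (lmeet x y), A (ljoin x y), A (lodot x y) & A (loplus x y)]).

Definition subuniv2 (U R : rat * rat -> Prop) : Prop :=
  (forall p, R p -> U p) /\ R (0, 0) /\ R (1, 1) /\
  (forall p q, R p -> R q ->
     [/\ R (pmeet p q), R (pjoin p q), R (podot p q) & R (poplus p q)]).

Definition prodPL (k k' : nat) (p : rat * rat) : Prop := inPL k p.1 /\ inPL k' p.2.

Definition Cset (S : rat * rat -> Prop) (x y : rat) (p : rat * rat) : Prop :=
  S p /\ p.1 <= x /\ y <= p.2.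

Definition Cunion (S : rat * rat -> Prop) (k : nat) (y : nat -> rat)
  (p : rat * rat) : Prop :=
  exists2 i : nat, (i <= k)%N & Cset S (i%:R / k%:R) (y i) p.

(* Main.v *)
From Stdlib Require Import Classical ClassicalEpsilon.
Require Import Defs.
From mathcomp Require Import all_boot all_order all_algebra.
From mathcomp Require Import zify ring lra.
Import Order.TTheory GRing.Theory Num.Theory.
Local Open Scope ring_scope.

Lemma ler_divn (m a b : nat) : (0 < m)%N -> ((a%:R / m%:R : rat) <= b%:R / m%:R) = (a <= b)%N.
Proof. move=> hm; rewrite ler_pM2r ?ler_nat // invr_gt0 ltr0n //. Qed.
Lemma ltr_divn (m a b : nat) : (0 < m)%N -> ((a%:R / m%:R : rat) < b%:R / m%:R) = (a < b)%N.
Proof. move=> hm; rewrite ltr_pM2r ?ltr_nat // invr_gt0 ltr0n //. Qed.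

Lemma inPL_bounds m x : inPL m x -> 0 <= x <= 1.
Proof.
case=> i [hi ->]; case: m hi => [|m] hi.
  have->: i = 0%N by lia.
  by rewrite mul0r lexx ler01.
apply/andP; split; first by rewrite divr_ge0.
by rewrite ler_pdivrMr ?ltr0n // mul1r ler_nat.
Qed.

Lemma lodot_mono x y x' y' : x <= x' -> y <= y' -> lodot x y <= lodot x' y'.
Proof.
rewrite /lodot => h1 h2; apply: le_max2 => //; lra.
Qed.
Lemma loplus_mono x y x' y' : x <= x' -> y <= y' -> loplus x y <= loplus x' y'.
Proof.
rewrite /loplus => h1 h2; apply: le_min2 => //; lra.
Qed.

Lemma lmeet_n (m a b : nat) : (0 < m)%N ->
  lmeet (a%:R / m%:R) (b%:R / m%:R) = (minn a b)%:R / m%:R.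
Proof.
move=> hm; rewrite /lmeet; case: (leqP a b) => h.
  by rewrite min_l // ler_divn.
by rewrite min_r // ler_divn //; lia.
Qed.
Lemma ljoin_n (m a b : nat) : (0 < m)%N ->
  ljoin (a%:R / m%:R) (b%:R / m%:R) = (maxn a b)%:R / m%:R.
Proof.
move=> hm; rewrite /ljoin; case: (leqP a b) => h.
  by rewrite max_r // ler_divn.
by rewrite max_l // ler_divn //; lia.
Qed.
Lemma lodot_n (m a b : nat) : (0 < m)%N ->
  lodot (a%:R / m%:R) (b%:R / m%:R) = ((a + b) - m)%N%:R / m%:R.
Proof.
move=> hm; rewrite /lodot.
have E : a%:R / m%:R + b%:R / m%:R - 1 = ((a + b)%:R - m%:R) / m%:R :> rat.
  rewrite natrD; field; rewrite pnatr_eq0; lia.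
rewrite E; case: (leqP m (a + b)) => h.
  rewrite natrB // max_r // divr_ge0 // subr_ge0 ler_nat //.
have -> : (a + b - m)%N = 0%N by lia.
rewrite mul0r max_l // pmulr_lle0 ?invr_gt0 ?ltr0n // subr_le0 ler_nat; lia.
Qed.
Lemma loplus_n (m a b : nat) : (0 < m)%N ->
  loplus (a%:R / m%:R) (b%:R / m%:R) = (minn m (a + b))%:R / m%:R.
Proof.
move=> hm; rewrite /loplus -mulrDl -natrD.
have E : 1 = m%:R / m%:R :> rat by rewrite divff // pnatr_eq0; lia.
rewrite {1}E; have := @lmeet_n m m (a+b) hm; rewrite /lmeet => ->; done.
Qed.

Lemma one_n (m : nat) : (0 < m)%N -> m%:R / m%:R = 1 :> rat.
Proof. by move=> hm; rewrite divff // pnatr_eq0; lia. Qed.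
Lemma zero_n (m : nat) : 0%:R / m%:R = 0 :> rat.
Proof. by rewrite mul0r. Qed.

Definition closedR (R : rat * rat -> Prop) := forall p q, R p -> R q ->
  [/\ R (pmeet p q), R (pjoin p q), R (podot p q) & R (poplus p q)].

Section L.
Variables (n : nat) (R : rat * rat -> Prop).
Hypothesis hn : (0 < n)%N.
Hypothesis hR : closedR R.
Local Notation "[ i ]" := ((i%:R / n%:R) : rat) (at level 0).

Lemma Rdbl i j : R ([i], [j]) -> R ([minn n (i + i)], [minn n (j + j)]).
Proof. move=> h; have [_ _ _] := hR _ _ h h; by rewrite /poplus /= !loplus_n. Qed.
Lemma Rsq i j : R ([i], [j]) -> R ([(i + i - n)%N], [(j + j - n)%N]).
Proof. move=> h; have [_ _ ] := hR _ _ h h; by rewrite /podot /= !lodot_n. Qed.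

Lemma L2 i : (i < n)%N -> R ([i], [n]) -> R (0, 1).
Proof.
elim/ltn_ind: i => i IH hi h.
case: (posnP i) => [i0|ip].
  by move: h; rewrite i0 zero_n one_n.
have := Rsq _ _ h; rewrite (_ : (n + n - n)%N = n); last lia.
apply: IH; lia.
Qed.

Lemma L3 d i j : (n - (j - i) <= d)%N -> (i < j)%N -> (j <= n)%N -> R ([i], [j]) -> R (0, 1).
Proof.
elim: d i j => [|d IH] i j hd hij hjn h.
  have i0 : i = 0%N by lia.
  have jn : j = n by lia.
  by move: h; rewrite i0 jn zero_n one_n.
case: (boolP ((i == 0%N) && (j == n))) => [/andP[/eqP i0 /eqP jn]|hne].
  by move: h; rewrite i0 jn zero_n one_n.
case: (leqP (j + j) n) => h2j.
  have := Rdbl _ _ h; rewrite (_ : minn n (i + i) = (i + i)%N); last lia.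
  rewrite (_ : minn n (j + j) = (j + j)%N); last lia.
  apply: IH; lia.
case: (leqP n (i + i)) => h2i.
  have := Rsq _ _ h; apply: IH; lia.
have := Rdbl _ _ h; rewrite (_ : minn n (j + j) = n); last lia.
apply: L2; lia.
Qed.
End L.

Lemma inPL_n m i : (i <= m)%N -> inPL m (i%:R / m%:R).
Proof. by move=> h; exists i. Qed.
Lemma inPL0 m : inPL m 0.
Proof. by exists 0%N; rewrite zero_n. Qed.
Lemma inPL1 m : (0 < m)%N -> inPL m 1.
Proof. by move=> h; exists m; rewrite one_n. Qed.

Lemma inPL_meet m x y : (0 < m)%N -> inPL m x -> inPL m y -> inPL m (lmeet x y).
Proof. move=> hm [a [ha ->]] [b [hb ->]]; rewrite lmeet_n //; apply: inPL_n; lia. Qed.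
Lemma inPL_join m x y : (0 < m)%N -> inPL m x -> inPL m y -> inPL m (ljoin x y).
Proof. move=> hm [a [ha ->]] [b [hb ->]]; rewrite ljoin_n //; apply: inPL_n; lia. Qed.
Lemma inPL_odot m x y : (0 < m)%N -> inPL m x -> inPL m y -> inPL m (lodot x y).
Proof. move=> hm [a [ha ->]] [b [hb ->]]; rewrite lodot_n //; apply: inPL_n; lia. Qed.
Lemma inPL_oplus m x y : (0 < m)%N -> inPL m x -> inPL m y -> inPL m (loplus x y).
Proof. move=> hm [a [ha ->]] [b [hb ->]]; rewrite loplus_n //; apply: inPL_n; lia. Qed.

Lemma least_nat (P : nat -> Prop) : (exists m, P m) ->
  exists m, P m /\ forall m', P m' -> (m <= m')%N.
Proof.
move=> [m0 Pm0]; apply: NNPP => hno.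
suff: forall N m, (m < N)%N -> ~ P m by move/(_ m0.+1 m0 (ltnSn _)).
elim=> [|N IH] m hm Pm; first by [].
case: (ltngtP m N) => h.
- exact: (IH m h Pm).
- lia.
- apply: hno; exists m; split => // m' Pm'.
  rewrite leqNgt; apply/negP => hm'; apply: (IH m') Pm'; lia.
Qed.

Lemma lodot0 x : x <= 1 -> lodot 0 x = 0.
Proof. by move=> h; rewrite /lodot max_l //; lra. Qed.
Lemma lodot1 x : 0 <= x -> lodot 1 x = x.
Proof. by move=> h; rewrite /lodot (_ : 1 + x - 1 = x) ?max_r //; lra. Qed.
Lemma loplus0 x : x <= 1 -> loplus 0 x = x.
Proof. by move=> h; rewrite /loplus add0r min_r. Qed.
Lemma loplus1 x : 0 <= x -> loplus 1 x = 1.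
Proof. by move=> h; rewrite /loplus min_l //; lra. Qed.
Lemma lodotC x y : lodot x y = lodot y x.
Proof. by rewrite /lodot (addrC x). Qed.
Lemma loplusC x y : loplus x y = loplus y x.
Proof. by rewrite /loplus (addrC x). Qed.
Arguments inPL_bounds {m x}.

Theorem proposition3p12 (n k k' : nat) :
  (1 <= n)%N -> (k %| n)%N -> (k' %| n)%N ->
  (* part (1) *)
  (forall R : rat * rat -> Prop,
     subuniv2 (prodPL n n) R ->
     (forall p, R p -> p.1 <= p.2) ->
     ~ (exists A : rat -> Prop, subuniv1 (inPL n) A /\
          (forall p, R p <-> (A p.1 /\ p.2 = p.1))) ->
     (forall x z, ((exists z', R (x, z')) /\ (exists x', R (x', z))) <->
                  prodPL k k' (x, z)) ->
     exists y : nat -> rat,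
       (forall i, (i <= k)%N ->
          [/\ inPL k' (y i), R (i%:R / k%:R, y i) &
              forall z, inPL k' z -> R (i%:R / k%:R, z) -> y i <= z]) /\
       y 0%N = 0 /\ y k = 1 /\
       (forall p, R p <-> Cunion (prodPL k k') k y p)) /\
  (* part (2) *)
  (forall y : nat -> rat,
     (forall i, (i <= k)%N -> inPL k' (y i)) ->
     (forall i j, (i <= j)%N -> (j <= k)%N -> y i <= y j) ->
     y 0%N = 0 -> y k = 1 ->
     (forall i, (1 <= i)%N -> (i <= k.-1)%N -> i%:R / k%:R <= y i) ->
     (subuniv2 (prodPL k k') (Cunion (prodPL k k') k y) <->
      (forall i j, (1 <= i)%N -> (i <= k.-1)%N -> (1 <= j)%N -> (j <= k.-1)%N ->
         Cunion (prodPL k k') k y (podot (i%:R / k%:R, y i) (j%:R / k%:R, y j)) /\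
         Cunion (prodPL k k') k y (poplus (i%:R / k%:R, y i) (j%:R / k%:R, y j))))).
Proof.
move=> hn hk hk'.
have kp : (0 < k)%N by move: hk; case: k => //; rewrite dvd0n; lia.
have k'p : (0 < k')%N by move: hk'; case: k' => //; rewrite dvd0n; lia.
split.
- move=> R [HS [H00 [H11 Hcl]]] Hle Hnd Hpr.
  have Rcg : forall p q, R p -> p = q -> R q by move=> p q h <-.
  have [p [Rp Pne]] : exists p, R p /\ p.1 != p.2.
    apply: NNPP => Hno; apply: Hnd; exists (fun x => R (x, x)); split.
      split; first by move=> x /HS [].
      split; first by [].
      split; first by [].
      by move=> x y hx hy; have [a b c d] := Hcl _ _ hx hy.
    move=> [a b]; split => /=; last by move=> [h ->].
    move=> hab; case: (eqVneq a b) hab => [<-|hne hab]; first by split.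
    by exfalso; apply: Hno; exists (a, b).
  have R01 : R (0, 1).
    case: p Rp Pne => a b Rp /= Pne.
    have [[i [hi ea]] [j [hj eb]]] := HS _ Rp.
    have hlt : a < b by rewrite lt_neqAle Pne (Hle _ Rp).
    move: hlt Rp; rewrite /= in ea eb; rewrite ea eb ltr_divn // => hij Rp.
    by apply: (@L3 n R hn Hcl n i j) => //; lia.

  have bnd : forall x z, R (x, z) -> (0 <= x <= 1) /\ (0 <= z <= 1).
    by move=> x z /HS [/inPL_bounds h1 /inPL_bounds h2].
  have Hdu : forall x0 y0 x' z', R (x0, y0) -> prodPL k k' (x', z') ->
      x' <= x0 -> y0 <= z' -> R (x', z').
    move=> x0 y0 x' z' Rxy [hx' hz'] le1 le2.
    have [[w Rw] _] := (proj2 (Hpr x' 0)) (conj hx' (inPL0 k')).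
    have [_ [u Ru]] := (proj2 (Hpr 0 z')) (conj (inPL0 k) hz').
    have [[/andP[u0 _] _]] := bnd _ _ Ru.
    have [[/andP[x00 _] _]] := bnd _ _ Rxy.
    have [[/andP[x'0 _] _]] := bnd _ _ Rw.
    have /andP[_ z'1] := inPL_bounds hz'.
    have R0z : R (0, z').
      have [a _ _ _] := Hcl _ _ Ru R01.
      by move: a; rewrite /pmeet /lmeet /= min_r // min_l.
    have Rxz : R (x0, z').
      have [_ a _ _] := Hcl _ _ Rxy R0z.
      by move: a; rewrite /pjoin /ljoin /= max_l // max_r.
    have Rxw : R (x', Num.max w z').
      have [_ a _ _] := Hcl _ _ Rw R0z.
      by move: a; rewrite /pjoin /ljoin /= max_l.
    have [a _ _ _] := Hcl _ _ Rxw Rxz.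
    by move: a; rewrite /pmeet /lmeet /= min_l // min_r // le_max lexx orbT.
  have Hy : forall i, exists z, (i <= k)%N -> [/\ inPL k' z, R (i%:R / k%:R, z) &
      forall z', inPL k' z' -> R (i%:R / k%:R, z') -> z <= z'].
    move=> i; case: (leqP i k) => hik; last by exists 0.
    have : prodPL k k' (i%:R / k%:R, 0) by split; [exact: inPL_n | exact: inPL0].
    move/Hpr => [[z' Rz'] _].
    have : prodPL k k' (i%:R / k%:R, z') by apply/Hpr; split; [exists z' | exists (i%:R / k%:R)].
    case=> _ [m0 [hm0 ez']]; rewrite /= in ez'.
    have [m [[hm Rm] hmin]] := @least_nat (fun m => (m <= k')%N /\ R (i%:R / k%:R, m%:R / k'%:R))
       (ex_intro _ m0 (conj hm0 (Rcg _ _ Rz' (congr1 _ ez')))).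
    exists (m%:R / k'%:R) => _; split => //; first exact: inPL_n.
    move=> z [m' [hm' ->]] Rz; rewrite ler_divn //; apply: hmin; split => //.
  pose y i := proj1_sig (constructive_indefinite_description _ (Hy i)).
  have Hys : forall i, (i <= k)%N -> [/\ inPL k' (y i), R (i%:R / k%:R, y i) &
      forall z', inPL k' z' -> R (i%:R / k%:R, z') -> y i <= z'].
    by move=> i; rewrite /y; case: constructive_indefinite_description.
  exists y; split; first exact: Hys.
  split.
    have [h1 h2 h3] := Hys 0%N (leq0n k).
    apply/le_anti/andP; split; last by case/andP: (inPL_bounds h1).
    by apply: h3; [exact: inPL0 | rewrite zero_n].
  split.
    have [h1 h2 h3] := Hys k (leqnn k).
    apply/le_anti/andP; split; first by case/andP: (inPL_bounds h1).
    by have := Hle _ h2; rewrite /= one_n.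
  move=> [a b]; split.
    move=> Rab.
    have Sp : prodPL k k' (a, b) by apply/Hpr; split; [exists b | exists a].
    case: (Sp) => [[i [hi ea]] hb]; rewrite /= in ea.
    exists i => //; split => //; split; first by rewrite /= ea.
    have [_ _ h3] := Hys i hi; apply: h3 => //; by rewrite -ea.
  move=> [i hi [Sp [h1 h2]]].
  have [_ h _] := Hys i hi.
  exact: (Hdu _ _ _ _ h Sp h1 h2).
- move=> y Hyin Hymono Hy0 Hyk _.
  set C := Cunion (prodPL k k') k y.
  have gen : forall i, (i <= k)%N -> C (i%:R / k%:R, y i).
    by move=> i hi; exists i => //; split; [split; [exact: inPL_n | exact: Hyin] | split].
  have y01 : forall i, (i <= k)%N -> 0 <= y i <= 1 by move=> i /Hyin /inPL_bounds.
  split.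
    move=> [HS [_ [_ Hcl]]] i j hi1 hik hj1 hjk.
    have Ci := gen i ltac:(lia); have Cj := gen j ltac:(lia).
    by have [_ _ c d] := Hcl _ _ Ci Cj.
  move=> Hgen.
  have C00 : C (0, 0).
    exists 0%N => //; split; first by split; apply: inPL0.
    by rewrite zero_n Hy0.
  have C11 : C (1, 1).
    exists k => //; split; first by split; apply: inPL1.
    by rewrite one_n // Hyk.
  have Cmono : forall g r, C g -> prodPL k k' r -> r.1 <= g.1 -> g.2 <= r.2 -> C r.
    move=> g r [l hl [Sg [g1 g2]]] Sr r1 r2; exists l => //; split => //; split.
      exact: le_trans g1.
    exact: le_trans r2.
  have SC : forall p, C p -> prodPL k k' p by move=> p [l _ []].
  split; first exact: SC.
  split; first exact: C00.
  split; first exact: C11.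
  move=> p q Cp Cq.
  have [Sp1 Sp2] := SC _ Cp; have [Sq1 Sq2] := SC _ Cq.
  case: Cp => i hi [_ [pi1 pi2]]; case: Cq => j hj [_ [qj1 qj2]].
  have odotC : forall a b, C (podot a b) -> C (podot b a).
    by move=> [a1 a2] [b1 b2]; rewrite /podot /= (lodotC a1) (lodotC a2).
  have oplusC : forall a b, C (poplus a b) -> C (poplus b a).
    by move=> [a1 a2] [b1 b2]; rewrite /poplus /= (loplusC a1) (loplusC a2).
  have gk : forall i, (i <= k)%N -> 0 <= (i%:R / k%:R : rat) <= 1.
    by move=> l hl; apply: inPL_bounds; apply: inPL_n.
  have Hod : forall i j, (i <= k)%N -> (j <= k)%N ->
      C (podot (i%:R / k%:R, y i) (j%:R / k%:R, y j)) /\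
      C (poplus (i%:R / k%:R, y i) (j%:R / k%:R, y j)).
    have edge : forall i j, (i <= k)%N -> (j <= k)%N -> (i = 0%N \/ i = k) ->
      C (podot (i%:R / k%:R, y i) (j%:R / k%:R, y j)) /\
      C (poplus (i%:R / k%:R, y i) (j%:R / k%:R, y j)).
      move=> i0 j0 hi0 hj0 [->|->]; rewrite /podot /poplus /=.
        case/andP: (gk _ hj0) => g0 g1; case/andP: (y01 _ hj0) => y0' y1'.
        rewrite zero_n Hy0 !lodot0 // !loplus0 //; split => //; exact: gen.
      case/andP: (gk _ hj0) => g0 g1; case/andP: (y01 _ hj0) => y0' y1'.
      rewrite one_n // Hyk !lodot1 // !loplus1 //; split => //; exact: gen.
    move=> i0 j0 hi0 hj0.
    case: (boolP ((i0 == 0%N) || (i0 == k))) => [/orP[/eqP->|/eqP->]|h1].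
    - by apply: edge => //; left.
    - by apply: edge => //; right.
    case: (boolP ((j0 == 0%N) || (j0 == k))) => [/orP[/eqP->|/eqP->]|h2].
    - by have [a b] := edge 0%N i0 (leq0n k) hi0 (or_introl erefl); split; [apply: odotC|apply: oplusC].
    - by have [a b] := edge k i0 (leqnn k) hi0 (or_intror erefl); split; [apply: odotC|apply: oplusC].
    apply: Hgen; lia.
  have [Hodot Hoplus] := Hod i j hi hj.
  split.
  - case: (leqP i j) => hij.
      apply: (Cmono (i%:R / k%:R, y i)); first exact: gen.
      + by split; apply: inPL_meet.
      + by rewrite /= /lmeet ge_min pi1.
      + rewrite /= /lmeet le_min pi2 /=; exact: le_trans (Hymono _ _ hij hj) qj2.
    apply: (Cmono (j%:R / k%:R, y j)); first exact: gen.
    + by split; apply: inPL_meet.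
    + by rewrite /= /lmeet ge_min qj1 orbT.
    + rewrite /= /lmeet le_min qj2 andbT; apply: le_trans (Hymono _ _ (ltnW hij) hi) pi2.
  - case: (leqP i j) => hij.
      apply: (Cmono (j%:R / k%:R, y j)); first exact: gen.
      + by split; apply: inPL_join.
      + rewrite /= /ljoin ge_max; apply/andP; split; last exact: qj1.
        by apply: le_trans pi1 _; rewrite ler_divn.
      + by rewrite /= /ljoin le_max qj2 orbT.
    apply: (Cmono (i%:R / k%:R, y i)); first exact: gen.
    + by split; apply: inPL_join.
    + rewrite /= /ljoin ge_max; apply/andP; split; first exact: pi1.
      by apply: le_trans qj1 _; rewrite ler_divn //; exact: ltnW.
    + by rewrite /= /ljoin le_max pi2.
  - apply: (Cmono _ _ Hodot).
    + by split; apply: inPL_odot.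
    + exact: lodot_mono.
    + exact: lodot_mono.
  - apply: (Cmono _ _ Hoplus).
    + by split; apply: inPL_oplus.
    + exact: loplus_mono.
    + exact: loplus_mono.
Qed.
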